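(* Let $\epsilon_0>0$, $\Omega_1,\Omega_2>0$, and $\lambda_k=d_k^\alpha$ with $0<d_1<d_2$, $\alpha>0$. For $\rho_1,\rho_2>0$ let $B=\frac{\epsilon_0}{\rho_2}$, $C=\frac{\epsilon_0}{\rho_1}$, $k=\frac{\epsilon_0\rho_2}{\rho_1}$. Then the problem $$\min_{\rho_1,\rho_2}\ 1-\frac{\lambda_2}{\lambda_2+k\lambda_1}e^{-\lambda_1C-(\lambda_2+k\lambda_1)B}\quad\text{s.t. } 0<\rho_1\le\Omega_1,\ 0<\rho_2\le\Omega_2$$ has optimal solution $$\rho_1=\Omega_1,\qquad \rho_2=\min\left(\Omega_2,\ \frac{\epsilon_0\lambda_1\lambda_2+\lambda_2\sqrt{4\Omega_1\lambda_1+\epsilon_0^2\lambda_1^2}}{2\lambda_1}\right).$$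
   Context: Interpretation: uplink two-user NOMA with target SNR $\epsilon_0$, where $\rho_1,\rho_2$ are the transmit SNRs of the nearer and farther user, constrained by maximum transmit SNRs $\Omega_1,\Omega_2$; the objective is the common outage probability when users are ordered correctly. *)

(* Defs.v *)
From Stdlib Require Import Reals.
Open Scope R_scope.

Definition outage (eps0 lam1 lam2 rho1 rho2 : R) : R :=
  let B := eps0 / rho2 in
  let C := eps0 / rho1 in
  let k := eps0 * rho2 / rho1 in
  1 - lam2 / (lam2 + k * lam1) * exp (- lam1 * C - (lam2 + k * lam1) * B).

Definition feasible (Om1 Om2 rho1 rho2 : R) : Prop :=
  0 < rho1 <= Om1 /\ 0 < rho2 <= Om2.

(* Main.v *)
Require Import Defs.
From Stdlib Require Import Reals Lra Psatz.
From Coquelicot Require Import Coquelicot.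
Open Scope R_scope.

Lemma out_eq e a b r1 r2 : 0 < a -> 0 < b -> 0 < e -> 0 < r1 -> 0 < r2 ->
  outage e a b r1 r2 =
  1 - exp (ln b - ln (b + e*a*r2/r1) - b*e/r2 - a*e/r1 - a*e^2/r1).
Proof.
  intros ha hb he h1 h2. unfold outage; cbv zeta.
  assert (hX : 0 < b + e*a*r2/r1).
  { assert (0 < e*a*r2/r1) by (apply Rdiv_lt_0_compat; [repeat apply Rmult_lt_0_compat|]; lra). lra. }
  replace (ln b - ln (b + e*a*r2/r1) - b*e/r2 - a*e/r1 - a*e^2/r1)
    with ((ln b + - ln (b + e*a*r2/r1)) + (- a * (e / r1) - (b + e * r2 / r1 * a) * (e / r2))).
  2:{ field; lra. }
  rewrite exp_plus, exp_plus, exp_Ropp, !exp_ln by lra.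
  replace (e * r2 / r1 * a) with (e*a*r2/r1) by (field; lra).
  unfold Rdiv at 1. ring.
Qed.

Lemma exp_le' x y : x <= y -> exp x <= exp y.
Proof. intro h. destruct h as [h|h]; [left; apply exp_increasing, h | subst; lra]. Qed.

Definition phi e a b O1 x := ln (b + e*a*x/O1) + b*e/x.

Lemma phi_der e a b O1 x : 0 < a -> 0 < b -> 0 < e -> 0 < O1 -> 0 < x ->
  derivable_pt_lim (phi e a b O1) x (e*a/O1/(b+e*a*x/O1) - b*e/x^2).
Proof.
  intros ha hb he hO hx. apply is_derive_Reals. unfold phi.
  assert (0 < e*a*x/O1) by (apply Rdiv_lt_0_compat; [repeat apply Rmult_lt_0_compat|]; lra).
  auto_derive.
  all: try (repeat split; unfold Rdiv in *; lra).
  all: assert (0 < e*a*x) by (repeat apply Rmult_lt_0_compat; lra); field; repeat split; nra.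
Qed.

Lemma der_sign e a b O1 x : 0 < a -> 0 < b -> 0 < e -> 0 < O1 -> 0 < x ->
  (e*a/O1/(b+e*a*x/O1) - b*e/x^2) * (x^2 * (b*O1 + e*a*x) / O1)
  = e*a*x^2/O1 - b*e*(b + e*a*x/O1).
Proof.
  intros. assert (0 < e*a*x) by (repeat apply Rmult_lt_0_compat; lra).
  assert (b + e*a*x/O1 > 0). { assert (0 < e*a*x/O1) by (apply Rdiv_lt_0_compat; lra). lra. }
  assert (b*O1 + e*a*x > 0) by nra.
  field. repeat split; unfold Rdiv in *; try lra.
Qed.

Lemma quad e a b O1 x : 0 < a -> 0 < b -> 0 < e -> 0 < O1 -> 0 < x ->
  let S := sqrt (4 * O1 * a + e ^ 2 * a ^ 2) in
  let r := (e * a * b + b * S) / (2 * a) in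
  (x <= r -> e*a*x^2/O1 - b*e*(b + e*a*x/O1) <= 0) /\
  (r <= x -> 0 <= e*a*x^2/O1 - b*e*(b + e*a*x/O1)).
Proof.
  intros ha hb he hO hx S r.
  assert (hS2 : S*S = 4 * O1 * a + e ^ 2 * a ^ 2).
  { unfold S; apply sqrt_sqrt; nra. }
  assert (hS0 : 0 <= S) by apply sqrt_pos.
  assert (hSe : e*a <= S) by nra.
  assert (hq : e*a*x^2/O1 - b*e*(b + e*a*x/O1) =
     e*a/O1 * ((x - r) * (x - b*(e*a - S)/(2*a)))).
  { unfold r. field_simplify; try lra. 
    replace (S^2) with (S*S) by ring. rewrite hS2. field; lra. }
  assert (hr2 : 0 < x - b*(e*a - S)/(2*a)).
  { assert (b*(e*a - S)/(2*a) <= 0).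
    { unfold Rdiv. apply Rmult_le_0_r. nra. left; apply Rinv_0_lt_compat; lra. }
    lra. }
  assert (hc : 0 < e*a/O1) by (apply Rdiv_lt_0_compat; nra).
  rewrite hq. split; intro h.
  - assert (0 <= (r - x) * (x - b*(e*a - S)/(2*a))) by nra. nra.
  - assert (0 <= (x - r) * (x - b*(e*a - S)/(2*a))) by nra. nra.
Qed.

Lemma phi_opt e a b O1 O2 r2 : 0 < a -> 0 < b -> 0 < e -> 0 < O1 -> 0 < r2 -> r2 <= O2 ->
  let S := sqrt (4 * O1 * a + e ^ 2 * a ^ 2) in
  let r := (e * a * b + b * S) / (2 * a) in
  phi e a b O1 (Rmin O2 r) <= phi e a b O1 r2.
Proof.
  intros ha hb he hO h2 h2O S r.
  assert (hr : 0 < r).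
  { unfold r. apply Rdiv_lt_0_compat; [|lra].
    assert (0 <= S) by apply sqrt_pos.
    assert (0 < e*a*b) by (repeat apply Rmult_lt_0_compat; lra).
    assert (0 <= b*S) by (apply Rmult_le_pos; lra). lra. }
  set (s := Rmin O2 r).
  assert (hs0 : 0 < s) by (unfold s; apply Rmin_glb_lt; lra).
  assert (hsr : s <= r) by apply Rmin_r.
  assert (hpos : forall x, 0 < x -> 0 < x^2 * (b*O1 + e*a*x) / O1).
  { intros x hx. apply Rdiv_lt_0_compat; [|lra]. apply Rmult_lt_0_compat; [nra|].
    assert (0 < e*a*x) by (repeat apply Rmult_lt_0_compat; lra). nra. }
  destruct (Rtotal_order r2 s) as [hlt | [heq | hgt]].
  - destruct (MVT_cor2 (phi e a b O1) (fun x => e*a/O1/(b+e*a*x/O1) - b*e/x^2) r2 s hlt)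
      as [c [hc hcr]].
    { intros c hc. apply phi_der; lra. }
    assert (hcr' : c <= r) by lra.
    destruct (quad e a b O1 c ha hb he hO ltac:(lra)) as [q1 _].
    specialize (q1 hcr'). rewrite <- (der_sign e a b O1 c) in q1 by lra.
    specialize (hpos c ltac:(lra)).
    assert (e*a/O1/(b+e*a*c/O1) - b*e/c^2 <= 0) by nra. nra.
  - subst s. rewrite heq. lra.
  - assert (hsr' : s = r).
    { unfold s. unfold Rmin. destruct (Rle_dec O2 r); [|lra].
      exfalso. unfold s, Rmin in hgt. destruct (Rle_dec O2 r); lra. }
    destruct (MVT_cor2 (phi e a b O1) (fun x => e*a/O1/(b+e*a*x/O1) - b*e/x^2) s r2 hgt)
      as [c [hc hcr]].
    { intros c hc. apply phi_der; lra. }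
    assert (hcr' : r <= c) by lra.
    destruct (quad e a b O1 c ha hb he hO ltac:(lra)) as [_ q2].
    specialize (q2 hcr'). rewrite <- (der_sign e a b O1 c) in q2 by lra.
    specialize (hpos c ltac:(lra)).
    assert (0 <= e*a/O1/(b+e*a*c/O1) - b*e/c^2) by nra. nra.
Qed.

Theorem corollary3 (eps0 Om1 Om2 d1 d2 alpha : R) :
  0 < eps0 -> 0 < Om1 -> 0 < Om2 -> 0 < d1 -> d1 < d2 -> 0 < alpha ->
  let lam1 := Rpower d1 alpha in
  let lam2 := Rpower d2 alpha in
  let rho1s := Om1 in
  let rho2s := Rmin Om2
      ((eps0 * lam1 * lam2 + lam2 * sqrt (4 * Om1 * lam1 + eps0 ^ 2 * lam1 ^ 2))
       / (2 * lam1)) in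
  feasible Om1 Om2 rho1s rho2s /\
  forall rho1 rho2, feasible Om1 Om2 rho1 rho2 ->
    outage eps0 lam1 lam2 rho1s rho2s <= outage eps0 lam1 lam2 rho1 rho2.
Proof.
  intros he hO1 hO2 hd1 hd12 hal lam1 lam2 rho1s rho2s.
  assert (ha : 0 < lam1) by (unfold lam1, Rpower; apply exp_pos).
  assert (hb : 0 < lam2) by (unfold lam2, Rpower; apply exp_pos).
  set (S := sqrt (4 * Om1 * lam1 + eps0 ^ 2 * lam1 ^ 2)).
  set (r := (eps0 * lam1 * lam2 + lam2 * S) / (2 * lam1)).
  assert (hr : 0 < r).
  { unfold r. apply Rdiv_lt_0_compat; [|lra].
    assert (0 <= S) by apply sqrt_pos.
    assert (0 < eps0*lam1*lam2) by (repeat apply Rmult_lt_0_compat; lra).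
    assert (0 <= lam2*S) by (apply Rmult_le_pos; lra). lra. }
  assert (hs0 : 0 < rho2s) by (unfold rho2s; fold S; fold r; apply Rmin_glb_lt; lra).
  assert (hsO : rho2s <= Om2) by apply Rmin_l.
  split. { unfold feasible, rho1s. lra. }
  intros rho1 rho2 [[h1 h1O] [h2 h2O]].
  unfold rho1s. rewrite !out_eq by lra.
  apply Rplus_le_compat_l, Ropp_le_contravar, exp_le'.
  pose proof (phi_opt eps0 lam1 lam2 Om1 Om2 rho2 ha hb he hO1 h2 h2O) as hp.
  cbv zeta in hp. fold S in hp. fold r in hp. fold rho2s in hp. fold r in rho2s.
  unfold phi in hp.
  assert (hl : ln (lam2 + eps0 * lam1 * rho2 / Om1) <= ln (lam2 + eps0 * lam1 * rho2 / rho1)).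
  { apply ln_le.
    - assert (0 < eps0*lam1*rho2/Om1) by (apply Rdiv_lt_0_compat; [repeat apply Rmult_lt_0_compat|]; lra). lra.
    - apply Rplus_le_compat_l. unfold Rdiv. apply Rmult_le_compat_l.
      + assert (0 < eps0*lam1*rho2) by (repeat apply Rmult_lt_0_compat; lra). lra.
      + apply Rinv_le_contravar; lra. }
  assert (hi : / Om1 <= / rho1) by (apply Rinv_le_contravar; lra).
  assert (h3 : lam1 * eps0 / rho1 >= lam1*eps0/Om1).
  { unfold Rdiv. apply Rle_ge, Rmult_le_compat_l; [nra|lra]. }
  assert (h4 : lam1 * eps0^2 / rho1 >= lam1*eps0^2/Om1).
  { unfold Rdiv. apply Rle_ge, Rmult_le_compat_l; [nra|lra]. }
  unfold rho2s; fold S; fold r. lra.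
Qed.
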